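(* Let $d\ge1$ and $\alpha>1$. For every $\zeta>0$ there exist $\theta>0$ and $N=N(\theta)\in\mathbb{N}$ such that for every $n>N$, every $s\in\{1,\dots,n\}$, every $n$-path $\gamma$ and every configuration $\omega'\subset\mathbb{N}\times\mathbb{R}^d$ having the $\theta$-property (with respect to $n$), at least one of the following holds: (i) $\max\{\Delta\gamma(s),\Delta\gamma(s+1)\}\le n^{\zeta}$; (ii) there exist an $n$-path $\gamma'$ and an integer $k>0$ such that $\gamma(i)=\gamma'(i)$ for all $i\notin[s,s+k-1]$, $(i,\gamma'(i))\in\omega'$ for all $i\in[s,s+k-1]$, and \[T_n(\gamma')+(k+1)n^{\theta}\le T_n(\gamma).\]
   Context: An $n$-path is a map $\gamma:\{1,\dots,n\}\to\mathbb{R}^d$; we write $\gamma(k)$ for its $k$-th point and use the convention $\gamma(0)=0$. For $x\in\mathbb{R}^d$, $|x|_1=\sum_i|x_i|$, and $\Delta\gamma(k)=|\gamma(k)-\gamma(k-1)|_1$. The passage time of an $n$-path is $T_n(\gamma)=\sum_{i=1}^n\Delta\gamma(i)^\alpha$. A configuration $\omega\subset\mathbb{N}\times\mathbb{R}^d$ has the $\theta$-property (for given $n$) if $\omega\cap(\{i\}\times(x+[0,n^\theta)^d))\neq\emptyset$ for every $i\in\mathbb{N}$ and every $x\in\mathbb{Z}^d$. *)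

(* Defs.v *)
From HB Require Import structures.
From mathcomp Require Import all_boot all_order all_algebra.
From mathcomp Require Import all_classical all_reals all_analysis.
Set Implicit Arguments. Unset Strict Implicit. Unset Printing Implicit Defensive.
Import Order.TTheory GRing.Theory Num.Theory.
Local Open Scope ring_scope.

Definition pt (R : realType) (d : nat) := 'I_d -> R.

(* An n-path is modelled as gamma : nat -> pt R d; only the values at
   1..n are meaningful, and the convention gamma(0) = 0 is imposed by [gpt]. *)
Definition gpt (R : realType) (d : nat) (gamma : nat -> pt R d) (i : nat) : pt R d :=
  if i == 0%N then (fun _ => 0) else gamma i.

Definition norm1 (R : realType) (d : nat) (x : pt R d) : R := \sum_(j < d) `|x j|.

(* Delta gamma(i) = |gamma(i) - gamma(i-1)|_1 for 1 <= i <= n; 0 outside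
   (in particular Delta gamma(n+1) = 0: the path has no step after time n). *)
Definition Delta (R : realType) (d n : nat) (gamma : nat -> pt R d) (i : nat) : R :=
  if (i == 0%N) || (n < i)%N then 0
  else norm1 (fun j => gpt gamma i j - gpt gamma i.-1 j).

Definition Tn (R : realType) (d n : nat) (alpha : R) (gamma : nat -> pt R d) : R :=
  \sum_(1 <= i < n.+1) (Delta n gamma i) `^ alpha.

Definition config (R : realType) (d : nat) := nat -> pt R d -> Prop.

Definition theta_property (R : realType) (d n : nat) (theta : R) (omega : config R d) : Prop :=
  forall (i : nat), (1 <= i)%N ->
  forall x : 'I_d -> int,
  exists y : pt R d, omega i y /\
    forall j : 'I_d, (x j)%:~R <= y j /\ y j < (x j)%:~R + (n%:R) `^ theta.

(* Main.v *)
Require Import Defs.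
From HB Require Import structures.
From mathcomp Require Import all_boot all_order all_algebra.
From mathcomp Require Import all_classical all_reals all_analysis.
From mathcomp Require Import ring lra zify.
Import Order.TTheory GRing.Theory Num.Theory.
Local Open Scope ring_scope.

Section Pow.
Variables (R : realType) (a : R).
Hypothesis ha : 1 < a.

Lemma tangentP (x y : R) : 0 <= x -> 0 <= y ->
  a * x `^ (a - 1) * (y - x) <= y `^ a - x `^ a.
Proof.
move=> x0 y0.
have a0 : 0 < a := lt_trans ltr01 ha.
have a10 : 0 < a - 1 by rewrite subr_gt0.
pose q := a / (a - 1).
have q0 : 0 < q by rewrite /q divr_gt0.
have pq : a^-1 + q^-1 = 1.
  rewrite /q invf_div; field; lra.
have := conjugate_powR y0 (powR_ge0 x (a - 1)) a0 q0 pq.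
rewrite -powRrM.
have -> : (a - 1) * q = a by rewrite /q; field; lra.
move=> H.
have H2 : a * (y * x `^ (a - 1)) <= y `^ a + x `^ a * (a - 1).
  have : a * (y * x `^ (a - 1)) <= a * (y `^ a / a + x `^ a / q).
    by rewrite ler_pM2l.
  suff -> : a * (y `^ a / a + x `^ a / q) = y `^ a + x `^ a * (a - 1) by [].
  rewrite /q; field; lra.
have E : x * x `^ (a - 1) = x `^ a by rewrite mulr_powRB1.
rewrite -E in H2 *.
set X := x `^ (a - 1) in H2 *.
have -> : a * X * (y - x) = a * (y * X) - (x * X) * a by ring.
set U := a * (y * X) in H2 *.
set V := x * X in H2 *.
set Y := y `^ a in H2 *.
have E2 : V * (a - 1) = V * a - V by ring.
rewrite E2 in H2.
set W := V * a in H2 *.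
lra.
Qed.


Lemma a_gt0 : 0 < a. Proof. exact: lt_trans ltr01 ha. Qed.
Lemma a1_gt0 : 0 < a - 1. Proof. by rewrite subr_gt0. Qed.

Lemma superadd (x y : R) : 0 <= x -> 0 <= y -> x `^ a + y `^ a <= (x + y) `^ a.
Proof.
move=> x0 y0.
have xy0 : 0 <= x + y by rewrite addr_ge0.
rewrite -(mulr_powRB1 x0 a_gt0) -(mulr_powRB1 y0 a_gt0) -(mulr_powRB1 xy0 a_gt0).
have a10 : 0 <= a - 1 by rewrite ltW // a1_gt0.
rewrite mulrDl lerD // ler_wpM2l // ge0_ler_powR // ?nnegrE //; lra.
Qed.

Lemma jensen (K : nat) (c : nat -> R) : (0 < K)%N -> (forall t, 0 <= c t) ->
  K%:R * ((\sum_(t < K) c t) / K%:R) `^ a <= \sum_(t < K) (c t) `^ a.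
Proof.
move=> K0 c0.
set S := \sum_(t < K) c t.
have S0 : 0 <= S by rewrite sumr_ge0.
have Kr : 0 < K%:R :> R by rewrite ltr0n.
set mu := S / K%:R.
have mu0 : 0 <= mu by rewrite divr_ge0 // ltW.
have H : \sum_(t < K) (a * mu `^ (a - 1) * (c t - mu)) <=
         \sum_(t < K) ((c t) `^ a - mu `^ a).
  by apply: ler_sum => t _; apply: tangentP.
rewrite -mulr_sumr sumrB sumr_const card_ord in H.
rewrite (_ : _ - mu *+ K = 0) in H; last first.
  rewrite -/S /mu -mulr_natl; field; lra.
rewrite mulr0 sumrB sumr_const card_ord subr_ge0 -mulr_natl in H.
exact: H.
Qed.

Lemma pow_ge_self (x : R) : 1 <= x -> x <= x `^ a.
Proof. by move=> x1; apply: le1r_powR => //; rewrite ltW. Qed.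

Lemma pow1 : (1 : R) `^ a = 1.
Proof. by rewrite powR1. Qed.

Lemma gap1 (x : R) : 0 <= x <= 1 ->
  (a * (a - 1) / 6) * x ^+ 2 <= (1 + x) `^ a + (1 - x) `^ a - 2.
Proof.
move=> /andP[x0 x1].
set y := x / 2.
have y0 : 0 <= y by rewrite /y; lra.
have y1 : y <= 1/2 by rewrite /y; lra.
have T1 := @tangentP (1 + y) (1 + x) ltac:(lra) ltac:(lra).
have T2 := @tangentP (1 - y) (1 - x) ltac:(lra) ltac:(lra).
have T3 := @tangentP 1 (1 + y) ltac:(lra) ltac:(lra).
have T4 := @tangentP 1 (1 - y) ltac:(lra) ltac:(lra).
rewrite !powR1 /= in T3 T4.
have D1 : 1 + (a - 1) * (2 / 3 * y) <= (1 + y) `^ (a - 1).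
  have y10 : (1 + y != 0) by rewrite gt_eqF //; lra.
  rewrite /powR (negbTE y10).
  apply: le_trans (expR_ge1Dx _).
  have a10 : 0 <= a - 1 by have := a1_gt0; rewrite le_eqVlt => ->; rewrite orbT.
  rewrite lerD2l; apply: ler_wpM2l => //.
  have hy : -1 < - (y / (1 + y)).
    rewrite ltrNl opprK ltr_pdivrMr; lra.
  have := le_ln1Dx hy.
  have -> : 1 - y / (1 + y) = (1 + y)^-1 by field.
  rewrite lnV ?posrE; last by lra.
  rewrite lerN2 => hl; apply: le_trans hl.
  rewrite ler_pdivlMr; last by lra.
  nra.
have D2 : (1 - y) `^ (a - 1) <= 1.
  rewrite -[X in _ <= X](powRr0 (1 - y)).
  apply: ger_powR; first by apply/andP; split; lra.
  by have := a1_gt0; lra.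
set A := (1 + y) `^ (a - 1) in T1 D1.
set Bb := (1 - y) `^ (a - 1) in T2 D2.
have E1 : (1 + x) - (1 + y) = y by rewrite /y; field.
have E2 : (1 - x) - (1 - y) = - y by rewrite /y; field.
rewrite E1 in T1; rewrite E2 in T2.
have E3 : 1 + y - 1 = y by ring.
have E4 : 1 - y - 1 = - y by ring.
rewrite E3 in T3; rewrite E4 in T4.
have a0 := a_gt0; have a10 := a1_gt0.
have K1 : a * A * y - a * Bb * y >= a * ((a - 1) * (2 / 3 * y)) * y.
  have : a * y * (A - Bb) >= a * y * ((a - 1) * (2 / 3 * y)).
    apply: ler_wpM2l; first by rewrite mulr_ge0 // ltW.
    lra.
  have -> : a * y * (A - Bb) = a * A * y - a * Bb * y by ring.
  have -> : a * y * ((a - 1) * (2 / 3 * y)) = a * ((a - 1) * (2 / 3 * y)) * y by ring.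
  done.
have -> : a * (a - 1) / 6 * x ^+ 2 = a * ((a - 1) * (2 / 3 * y)) * y.
  by rewrite /y; field.
set P1 := (1 + x) `^ a in T1 *.
set P2 := (1 - x) `^ a in T2 *.
set Q1 := (1 + y) `^ a in T1 T3.
set Q2 := (1 - y) `^ a in T2 T4.
have T2' : -(a * Bb * y) <= P2 - Q2.
  by rewrite (_ : -(a * Bb * y) = a * Bb * - y); [exact: T2 | ring].
have T3' : a * y <= Q1 - 1.
  by rewrite (_ : a * y = a * 1 * y); [exact: T3 | ring].
have T4' : -(a * y) <= Q2 - 1.
  by rewrite (_ : -(a * y) = a * 1 * - y); [exact: T4 | ring].
set Z := a * ((a - 1) * (2 / 3 * y)) * y in K1 *.
set M1 := a * A * y in T1 K1.
set M2 := a * Bb * y in K1 T2'.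
set ay := a * y in T3' T4'.
lra.
Qed.

Lemma gapm (m h : R) : 0 < m -> 0 <= h <= m ->
  (a * (a - 1) / 6) * (h / m) ^+ 2 * m `^ a <=
  (m + h) `^ a + (m - h) `^ a - 2 * m `^ a.
Proof.
move=> m0 /andP[h0 hm].
set x := h / m.
have x0 : 0 <= x by rewrite /x divr_ge0 // ltW.
have x1 : x <= 1 by rewrite /x ler_pdivrMr // mul1r.
have E1 : m + h = m * (1 + x) by rewrite /x; field; rewrite gt_eqF.
have E2 : m - h = m * (1 - x) by rewrite /x; field; rewrite gt_eqF.
have mm : 0 <= m by rewrite ltW.
rewrite E1 E2 (@powRM _ m (1 + x)) // ?(@powRM _ m (1 - x)) //; try lra.
have G := @gap1 x ltac:(by apply/andP; split).
have pm0 : 0 <= m `^ a by exact: powR_ge0.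
set Y := m `^ a in pm0 *.
have -> : Y * (1 + x) `^ a + Y * (1 - x) `^ a - 2 * Y =
   Y * ((1 + x) `^ a + (1 - x) `^ a - 2) by ring.
rewrite [X in X <= _]mulrC.
by apply: ler_wpM2l.
Qed.

Definition Cst := 12 * 2 `^ (a - 1) / (a - 1).

Lemma Cst_gt0 : 0 < Cst.
Proof.
rewrite /Cst divr_gt0 ?a1_gt0 // mulr_gt0 // powR_gt0 //.
Qed.

Lemma doubling (eps u v rho : R) : 0 < eps -> 0 <= v -> 0 <= rho ->
  4 * eps <= u -> Cst * eps <= rho ^+ 2 * u ->
  u `^ a + v `^ a < 2 * ((u + v) / 2 + eps) `^ a ->
  u * (1 - rho) <= (u + v) / 2.
Proof.
move=> e0 v0 r0 ue Cu H.
have u0 : 0 <= u by lra.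
have ur0 : 0 <= u * rho by rewrite mulr_ge0.
have -> : u * (1 - rho) = u - u * rho by ring.
case: (leP u v) => uv; first by lra.
set m := (u + v) / 2 in H *.
set h := (u - v) / 2.
have Eu : u = m + h by rewrite /m /h; field.
have Ev : v = m - h by rewrite /m /h; field.
have m0 : 0 <= m by rewrite /m; lra.
have h0 : 0 <= h by rewrite /h; lra.
have pv0 : 0 <= v `^ a by exact: powR_ge0.
case: (ltP m eps) => me.
  exfalso.
  have H1 : (m + eps) `^ a <= (2 * eps) `^ a.
    by apply: ge0_ler_powR; rewrite ?nnegrE; lra.
  have H2 : (2 * eps) `^ a + (2 * eps) `^ a <= (4 * eps) `^ a.
    have := @superadd (2 * eps) (2 * eps) ltac:(lra) ltac:(lra).
    by rewrite (_ : 2 * eps + 2 * eps = 4 * eps) //; ring.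
  have H3 : (4 * eps) `^ a <= u `^ a.
    by apply: ge0_ler_powR; rewrite ?nnegrE; lra.
  lra.
have mpos : 0 < m by lra.
have G := @gapm m h mpos ltac:(apply/andP; split; lra).
rewrite -Eu -Ev in G.
have Tg := @tangentP (m + eps) m ltac:(lra) m0.
have E3 : m - (m + eps) = - eps by ring.
rewrite E3 in Tg.
have B1 : (m + eps) `^ (a - 1) <= 2 `^ (a - 1) * m `^ (a - 1).
  rewrite -powRM; try lra.
  apply: ge0_ler_powR; rewrite ?nnegrE; try lra.
  by have := a1_gt0; lra.
have w0 : 0 < m `^ (a - 1) by rewrite powR_gt0.
have Epm : m `^ a = m * m `^ (a - 1) by rewrite mulr_powRB1 // ?a_gt0.
set w := m `^ (a - 1) in w0 B1 Epm.
set W := (m + eps) `^ (a - 1) in Tg B1.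
set Pm := m `^ a in G Tg Epm.
set Pme := (m + eps) `^ a in H Tg.
set t := 2 `^ (a - 1) in B1.
have a0 := a_gt0; have a10 := a1_gt0.
have t0 : 0 < t by rewrite /t powR_gt0.
have F1 : Pme - Pm <= a * eps * (t * w).
  have : a * eps * W <= a * eps * (t * w) by apply: ler_wpM2l; [rewrite mulr_ge0 // ?ltW // | exact: B1].
  suff : Pme - Pm <= a * eps * W by lra.
  by move: Tg; rewrite (_ : a * W * - eps = - (a * eps * W)); [lra | ring].
set x2 := (h / m) ^+ 2 in G.
have F2 : a * (a - 1) / 6 * x2 * (m * w) < 2 * (a * eps * (t * w)).
  rewrite -Epm; lra.
have F3 : (a - 1) / 6 * (h ^+ 2) < 2 * eps * t * m.
  have : (a * w / m) * ((a - 1) / 6 * h ^+ 2) < (a * w / m) * (2 * eps * t * m).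
    move: F2; rewrite /x2.
    have -> : a * (a - 1) / 6 * (h / m) ^+ 2 * (m * w) = (a * w / m) * ((a - 1) / 6 * h ^+ 2).
      by field; rewrite gt_eqF.
    have -> : 2 * (a * eps * (t * w)) = (a * w / m) * (2 * eps * t * m).
      by field; rewrite gt_eqF.
    done.
  rewrite ltr_pM2l //.
  by rewrite divr_gt0 // mulr_gt0.
have F4 : h ^+ 2 < Cst * eps * m.
  have : h ^+ 2 < (6 / (a - 1)) * (2 * eps * t * m).
    have : (6 / (a - 1)) * ((a - 1) / 6 * h ^+ 2) < (6 / (a - 1)) * (2 * eps * t * m).
      by rewrite ltr_pM2l // divr_gt0.
    have -> : (6 / (a - 1)) * ((a - 1) / 6 * h ^+ 2) = h ^+ 2 by field; rewrite gt_eqF.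
    done.
  suff -> : Cst * eps * m = (6 / (a - 1)) * (2 * eps * t * m) by [].
  by rewrite /Cst /t; field; rewrite gt_eqF.
have F5 : Cst * eps * m <= rho ^+ 2 * u * u.
  have mu : m <= u by lra.
  have C0 : 0 <= Cst * eps by rewrite mulr_ge0 // ltW // Cst_gt0.
  apply: (le_trans (y := Cst * eps * u)); first by rewrite ler_wpM2l.
  by rewrite ler_wpM2r.
have F6 : h < u * rho.
  case: (ltP h (u * rho)) => // hr; exfalso.
  have : (u * rho) ^+ 2 <= h ^+ 2 by rewrite ler_sqr // nnegrE.
  rewrite exprMn.
  have E5 : rho ^+ 2 * u * u = u ^+ 2 * rho ^+ 2 by ring.
  rewrite E5 in F5.
  lra.
lra.
Qed.

Definition PS (c : nat -> R) (K : nat) := \sum_(t < K) (c t) `^ a.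
Definition SS (c : nat -> R) (K : nat) := \sum_(t < K) c t.

Lemma sum_split (f : nat -> R) (K L : nat) :
  \sum_(t < K + L) f t = \sum_(t < K) f t + \sum_(t < L) f (K + t)%N.
Proof.
elim: L => [|L IH]; first by rewrite addn0 big_ord0 addr0.
by rewrite addnS !big_ord_recr /= IH addrA.
Qed.

Lemma sum_mono (f : nat -> R) (K L : nat) : (forall t, 0 <= f t) -> (K <= L)%N ->
  \sum_(t < K) f t <= \sum_(t < L) f t.
Proof.
move=> f0 KL; rewrite -(subnKC KL) sum_split lerDl.
by apply: sumr_ge0 => i _.
Qed.

Lemma iterate (B eps rho : R) (c : nat -> R) (m : nat) :
  (forall t, 0 <= c t) -> (0 < m)%N ->
  (B < c 0%N \/ ((1 < m)%N /\ B < c 1%N)) ->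
  0 < eps -> 0 <= rho -> 0 <= B ->
  4 * eps <= B / 4 -> Cst * eps <= rho ^+ 2 * (B / 4) ->
  (forall j, (2 ^ j <= m)%N -> j%:R * rho <= 1/2) ->
  (forall K, (2 <= K <= m)%N -> PS c K < K%:R * (SS c K / K%:R + eps) `^ a) ->
  m%:R / 2 * (B / 4) `^ a <= PS c m.
Proof.
move=> c0 m0 hB e0 r0 B0 eB CB hj W.
have a0' : 0 <= a by exact: ltW a_gt0.
have pc0 : forall t, 0 <= (c t) `^ a by move=> t; exact: powR_ge0.
have pB : (B / 4) `^ a <= B `^ a.
  by apply: ge0_ler_powR; rewrite ?nnegrE; lra.
have pB0 : 0 <= (B / 4) `^ a by exact: powR_ge0.
case: (ltnP 1 m) => m1; last first.
  have m1' : m = 1%N by apply/eqP; rewrite eqn_leq m1 m0.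
  subst m.
  case: hB => [hB|[]//].
  rewrite /PS big_ord_recr big_ord0 /= add0r.
  have : B `^ a <= (c 0%N) `^ a by apply: ge0_ler_powR; rewrite ?nnegrE ?c0 //; lra.
  lra.
have r12 : rho <= 1/2.
  by have := hj 1%N m1; rewrite (_ : (1%N)%:R = 1 :> R) // mul1r.
have claim : forall j, (0 < j)%N -> (2 ^ j <= m)%N ->
    B / 2 * (1 - (j.-1)%:R * rho) <= SS c (2 ^ j) / (2 ^ j)%:R.
  elim=> // j IH _ hjm.
  case: (posnP j) => [->|jpos].
    rewrite /= mul0r subr0 mulr1 /SS big_ord_recr big_ord_recr big_ord0 /= add0r.
    have := c0 0%N; have := c0 1%N.
    case: hB => [hB|[_ hB]]; rewrite (_ : 2%:R = 2 :> R) //; lra.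
  have hjm' : (2 ^ j <= m)%N.
    by apply: leq_trans hjm; rewrite leq_exp2l.
  have IHj := IH jpos hjm'.
  set K := (2 ^ j)%N in IHj hjm' *.
  have K0 : (0 < K)%N by rewrite expn_gt0.
  have Kr : 0 < K%:R :> R by rewrite ltr0n.
  have E2 : (2 ^ j.+1 = K + K)%N by rewrite expnS mul2n -addnn.
  rewrite E2 in hjm *.
  set u := SS c K / K%:R in IHj *.
  set v := (\sum_(t < K) c (K + t)%N) / K%:R.
  have v0 : 0 <= v by rewrite /v divr_ge0 ?sumr_ge0 // ltW.
  have ESS : SS c (K + K) / (K + K)%:R = (u + v) / 2.
    rewrite /SS sum_split -/(SS c K) /u /v natrD; field.
    by rewrite !gt_eqF // addr_gt0.
  have jr : (j.-1)%:R * rho <= 1/2.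
    apply: le_trans (hj j hjm').
    apply: ler_wpM2r => //; rewrite ler_nat; exact: leq_pred.
  have uB : B / 4 <= u.
    apply: le_trans IHj.
    have : 0 <= B * (j.-1)%:R * rho by rewrite mulr_ge0 // mulr_ge0.
    rewrite (_ : B / 2 * (1 - (j.-1)%:R * rho) = B / 2 - B / 2 * ((j.-1)%:R * rho)); last by ring.
    have : B / 2 * ((j.-1)%:R * rho) <= B / 2 * (1 / 2) by apply: ler_wpM2l => //; lra.
    lra.
  have WK := W (K + K)%N ltac:(rewrite hjm andbT; exact: (leq_add K0 K0)).
  rewrite ESS in WK.
  have J1 := @jensen K c K0 c0.
  have J2 := @jensen K (fun t => c (K + t)%N) K0 (fun t => c0 _).
  rewrite -/(SS c K) -/u -/v in J1 J2.
  have HP : PS c (K + K) = PS c K + \sum_(t < K) (c (K + t)%N) `^ a.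
    by rewrite /PS (sum_split (fun t => (c t) `^ a)).
  rewrite HP -/(PS c K) natrD in WK.
  have H : u `^ a + v `^ a < 2 * ((u + v) / 2 + eps) `^ a.
    set Q := ((u + v) / 2 + eps) `^ a in WK *.
    have : K%:R * (u `^ a + v `^ a) < K%:R * (2 * Q).
      rewrite -/(PS c K) in J1.
      rewrite mulrDr (_ : K%:R * (2 * Q) = (K%:R + K%:R) * Q); last by ring.
      move: WK J1 J2; set A1 := PS c K; set A2 := \sum_(t < K) _.
      set X1 := K%:R * u `^ a; set X2 := K%:R * v `^ a; set X3 := (K%:R + K%:R) * Q.
      lra.
    by rewrite ltr_pM2l.
  have D := @doubling eps u v rho e0 v0 r0 ltac:(lra)
     ltac:(apply: le_trans CB _; apply: ler_wpM2l => //; exact: sqr_ge0) H.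
  rewrite -ESS in D.
  apply: le_trans D.
  rewrite /= -(prednK jpos) /=.
  rewrite (prednK jpos).
  have u0 : 0 <= u by lra.
  have r1 : 0 <= 1 - rho by lra.
  have : B / 2 * (1 - (j.-1)%:R * rho) * (1 - rho) <= u * (1 - rho) by rewrite ler_wpM2r.
  have Ej : j%:R = (j.-1)%:R + 1 :> R.
    by rewrite -{1}(prednK jpos) -addn1 natrD.
  rewrite Ej.
  have : 0 <= B / 2 * (j.-1)%:R * rho ^+ 2 by rewrite !mulr_ge0 // ?sqr_ge0 //; lra.
  set jj := (j.-1)%:R.
  move=> h1 h2.
  have -> : B / 2 * (1 - (jj + 1) * rho) = B / 2 * (1 - jj * rho) * (1 - rho) - B / 2 * jj * rho ^+ 2 by ring.
  lra.
set J := trunc_log 2 m.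
have [hJ1 hJ2] : (2 ^ J <= m)%N /\ (m < 2 ^ J.+1)%N.
  by have := trunc_log_bounds (isT : (1 < 2)%N) m0; move/andP.
have J0 : (0 < J)%N by rewrite /J trunc_log_gt0.
have CJ := claim J J0 hJ1.
set K := (2 ^ J)%N in hJ1 hJ2 CJ.
have K0 : (0 < K)%N by rewrite expn_gt0.
have Kr : 0 < K%:R :> R by rewrite ltr0n.
have jr : (J.-1)%:R * rho <= 1/2.
  apply: le_trans (hj J hJ1).
  apply: ler_wpM2r => //; rewrite ler_nat; exact: leq_pred.
have uB : B / 4 <= SS c K / K%:R.
  apply: le_trans CJ.
  rewrite (_ : B / 2 * (1 - (J.-1)%:R * rho) = B / 2 - B / 2 * ((J.-1)%:R * rho)); last by ring.
  have : B / 2 * ((J.-1)%:R * rho) <= B / 2 * (1 / 2) by apply: ler_wpM2l => //; lra.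
  lra.
have J1 := @jensen K c K0 c0.
have P1 : PS c K <= PS c m by exact: (@sum_mono (fun t => (c t) `^ a) K m pc0 hJ1).
have pu : (B / 4) `^ a <= (SS c K / K%:R) `^ a.
  by apply: ge0_ler_powR; rewrite ?nnegrE; lra.
have mK : m%:R / 2 <= K%:R :> R.
  have : (m <= K + K)%N by move: hJ2; rewrite expnS mul2n -addnn => /ltnW.
  rewrite -(ler_nat R) natrD; lra.
have : m%:R / 2 * (B / 4) `^ a <= K%:R * (B / 4) `^ a by rewrite ler_wpM2r.
have : K%:R * (B / 4) `^ a <= K%:R * (SS c K / K%:R) `^ a by rewrite ler_wpM2l // ltW.
rewrite /SS in J1 pu *; rewrite /PS in P1 J1 *.
lra.
Qed.

End Pow.

Section Geo.
Variables (R : realType) (d n : nat) (alpha : R).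

Lemma norm1_ge0 (x : pt R d) : 0 <= norm1 x.
Proof. by rewrite /norm1 sumr_ge0. Qed.

Lemma Delta_ge0 (g : nat -> pt R d) i : 0 <= Delta n g i.
Proof. by rewrite /Delta; case: ifP => // _; exact: norm1_ge0. Qed.

Lemma Delta_out (g : nat -> pt R d) i : (n < i)%N -> Delta n g i = 0.
Proof. by move=> h; rewrite /Delta h orbT. Qed.

Lemma mid_sum (F : nat -> R) s L :
  \sum_(s <= i < s + L) F i = \sum_(t < L) F (s + t)%N.
Proof.
rewrite -{1}(add0n s) big_addn addKn big_mkord.
by apply: eq_bigr => i _; rewrite addnC.
Qed.

Lemma Tn_diff (g g' : nat -> pt R d) s L : (1 <= s)%N -> (s + L <= n.+1)%N ->
  (forall i, ((i < s) || (s + L <= i))%N -> Delta n g' i = Delta n g i) ->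
  Tn n alpha g - Tn n alpha g' =
  \sum_(t < L) (Delta n g (s + t)%N) `^ alpha -
  \sum_(t < L) (Delta n g' (s + t)%N) `^ alpha.
Proof.
move=> s1 sL H.
have sL' : (s <= s + L)%N by rewrite leq_addr.
rewrite /Tn !(@big_cat_nat _ _ _ s 1 n.+1) //; last by lia.
rewrite !(@big_cat_nat _ _ _ (s + L) s n.+1) //= !mid_sum.
have E1 : \sum_(1 <= i < s) (Delta n g' i) `^ alpha = \sum_(1 <= i < s) (Delta n g i) `^ alpha.
  by apply: eq_big_nat => i /andP[_ hi]; rewrite H // hi.
have E2 : \sum_(s + L <= i < n.+1) (Delta n g' i) `^ alpha =
          \sum_(s + L <= i < n.+1) (Delta n g i) `^ alpha.
  by apply: eq_big_nat => i /andP[hi _]; rewrite H // hi orbT.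
rewrite E1 E2; first ring. lia.
Qed.

Lemma step_bound (g' z : nat -> pt R d) (T : R) (i : nat) :
  0 <= T -> (1 <= i)%N ->
  (forall j, `|gpt g' i j - z i j| <= T) ->
  (forall j, `|gpt g' i.-1 j - z i.-1 j| <= T) ->
  Delta n g' i <= \sum_(j < d) `|z i j - z i.-1 j| + d%:R * (2 * T).
Proof.
move=> T0 i1 H1 H0.
have rhs0 : 0 <= \sum_(j < d) `|z i j - z i.-1 j| + d%:R * (2 * T).
  by rewrite addr_ge0 ?sumr_ge0 // mulr_ge0 // mulr_ge0.
rewrite /Delta; case: ifP => // _.
rewrite /norm1.
have -> : d%:R * (2 * T) = \sum_(j < d) (2 * T).
  by rewrite sumr_const card_ord mulr_natl.
rewrite -big_split /=; apply: ler_sum => j _.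
set A := gpt g' i j; set B := gpt g' i.-1 j.
have -> : A - B = (z i j - z i.-1 j) + ((A - z i j) + (z i.-1 j - B)) by ring.
apply: le_trans (ler_normD _ _) _; rewrite lerD2l.
apply: le_trans (ler_normD _ _) _.
have h1 := H1 j; have h0 := H0 j; rewrite distrC in h0.
rewrite -/A in h1; rewrite -/B in h0.
lra.
Qed.

Lemma theta_choice th (om : config R d) : theta_property n th om ->
  exists F : nat -> ('I_d -> int) -> pt R d, forall i x, (1 <= i)%N ->
    om i (F i x) /\ forall j, (x j)%:~R <= F i x j /\ F i x j < (x j)%:~R + n%:R `^ th.
Proof.
move=> H.
have H' : forall ix : nat * ('I_d -> int), exists y : pt R d, (1 <= ix.1)%N ->
    om ix.1 y /\ forall j, (ix.2 j)%:~R <= y j /\ y j < (ix.2 j)%:~R + n%:R `^ th.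
  move=> [i x] /=.
  case: (leqP 1 i) => hi.
    by have [y hy] := H i hi x; exists y.
  by exists (fun _ => 0) => h; exfalso; lia.
have [f hf] := choice H'.
by exists (fun i x => f (i, x)) => i x hi; exact: (hf (i, x) hi).
Qed.

Lemma close_floor (T : R) (w y : pt R d) : 1 <= T ->
  (forall j, (Num.floor (w j))%:~R <= y j /\ y j < (Num.floor (w j))%:~R + T) ->
  forall j, `|y j - w j| <= T.
Proof.
move=> T1 H j.
have [h1 h2] := H j.
have /andP[f1 f2] := floor_itv (w j).
rewrite intrD in f2.
rewrite ler_norml; apply/andP; split; lra.
Qed.

Lemma reroute (g : nat -> pt R d) (om : config R d) (Y : nat -> pt R d -> pt R d)
    (T : R) (z : nat -> pt R d) s k L :
  0 <= alpha -> 0 <= T -> (1 <= s)%N -> (0 < k)%N -> (s + L <= n.+1)%N ->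
  (forall i w, (1 <= i)%N -> om i (Y i w) /\ forall j, `|Y i w j - w j| <= T) ->
  (forall i, (s + L <= i <= n)%N -> (s + k <= i.-1)%N) ->
  (forall i, (s.-1 <= i)%N -> (i < s + L)%N -> ~~ (s <= i <= s + k - 1)%N -> z i = gpt g i) ->
  exists g' : nat -> pt R d,
    (forall i : nat, (1 <= i <= n)%N -> ~~ (s <= i <= s + k - 1)%N -> g i = g' i) /\
    (forall i : nat, (1 <= i <= n)%N -> (s <= i <= s + k - 1)%N -> om i (g' i)) /\
    \sum_(t < L) (Delta n g (s + t)%N) `^ alpha -
    \sum_(t < L) (\sum_(j < d) `|z (s + t)%N j - z (s + t).-1 j| + d%:R * (2 * T)) `^ alpha
      <= Tn n alpha g - Tn n alpha g'.
Proof.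
move=> a0 T0 s1 k0 sL HY Hk Hz.
pose g' := fun i => if (s <= i <= s + k - 1)%N then Y i (z i) else g i.
exists g'; split; [|split].
- by move=> i _ hi; rewrite /g' (negbTE hi).
- move=> i /andP[i1 _] hi; rewrite /g' hi.
  by have [] := HY i (z i) i1.
have gptE : forall i, ~~ (s <= i <= s + k - 1)%N -> gpt g' i = gpt g i.
  by move=> i hi; rewrite /gpt /g' (negbTE hi).
have DE : forall i, ((i < s) || (s + L <= i))%N -> Delta n g' i = Delta n g i.
  move=> i /orP[hi|hi].
    rewrite /Delta gptE; last by apply/negP => /andP[h _]; lia.
    by rewrite gptE //; apply/negP => /andP[h _]; lia.
  case: (leqP i n) => hin; last by rewrite !Delta_out.
  have := Hk i ltac:(by rewrite hi hin).
  move=> hk.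
  rewrite /Delta gptE; last by apply/negP => /andP[_ h]; lia.
  by rewrite gptE //; apply/negP => /andP[_ h]; lia.
rewrite (@Tn_diff g g' s L s1 sL DE) lerD2l lerN2.
apply: ler_sum => t _.
have cl : forall i, (s.-1 <= i)%N -> (i < s + L)%N -> forall j, `|gpt g' i j - z i j| <= T.
  move=> i h1 h2 j.
  case hb: (s <= i <= s + k - 1)%N.
    have i0 : (i != 0)%N by move/andP: hb => [h _]; lia.
    rewrite /gpt (negbTE i0) /g' hb.
    by have [_ ] := HY i (z i) ltac:(lia).
  rewrite gptE ?hb // (Hz i h1 h2) ?hb // subrr normr0 //.
apply: ge0_ler_powR => //; rewrite ?nnegrE ?Delta_ge0 //.
- by rewrite addr_ge0 ?sumr_ge0 // mulr_ge0 // mulr_ge0.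
apply: step_bound => //; first by lia.
- by have ht := ltn_ord t; apply: cl; lia.
- by have ht := ltn_ord t; apply: cl; lia.
Qed.

Lemma tele (f : nat -> R) (a K : nat) :
  \sum_(t < K) (f (a + t).+1 - f (a + t)%N) = f (a + K)%N - f a.
Proof.
elim: K => [|K IH]; first by rewrite big_ord0 addn0 subrr.
by rewrite big_ord_recr /= IH addnS; ring.
Qed.

Lemma window (g : nat -> pt R d) (om : config R d) (Y : nat -> pt R d -> pt R d)
    (T : R) s K :
  0 <= alpha -> 0 <= T -> (1 <= s)%N -> (2 <= K)%N -> (s + K <= n.+1)%N ->
  (forall i w, (1 <= i)%N -> om i (Y i w) /\ forall j, `|Y i w j - w j| <= T) ->
  exists g' : nat -> pt R d,
    (forall i : nat, (1 <= i <= n)%N -> ~~ (s <= i <= s + K.-1 - 1)%N -> g i = g' i) /\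
    (forall i : nat, (1 <= i <= n)%N -> (s <= i <= s + K.-1 - 1)%N -> om i (g' i)) /\
    \sum_(t < K) (Delta n g (s + t)%N) `^ alpha -
    K%:R * ((\sum_(t < K) Delta n g (s + t)%N) / K%:R + d%:R * (2 * T)) `^ alpha
      <= Tn n alpha g - Tn n alpha g'.
Proof.
move=> a0 T0 s1 K2 sK HY.
have Kr : 0 < K%:R :> R by rewrite ltr0n; lia.
case: s s1 sK => // a _ sK.
pose P := gpt g a; pose Q := gpt g (a + K)%N.
pose z := fun i : nat => (fun j : 'I_d => P j + ((i%:R - a%:R) / K%:R) * (Q j - P j)).
have Hz : forall i, (a.+1.-1 <= i)%N -> (i < a.+1 + K)%N ->
    ~~ (a.+1 <= i <= a.+1 + K.-1 - 1)%N -> z i = gpt g i.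
  move=> i hi1 hi2 hi3.
  have [->|->] : i = a \/ i = (a + K)%N by move: hi3; rewrite negb_and -!ltnNge; lia.
  - by apply/funext => j; rewrite /z subrr mul0r mul0r addr0.
  - apply/funext => j; rewrite /z natrD (_ : _ + K%:R - a%:R = K%:R); last by ring.
    rewrite divff ?gt_eqF // mul1r /Q; ring.
have [g' [h1 [h2 h3]]] := @reroute g om Y T z a.+1 K.-1 K a0 T0 isT ltac:(lia) sK HY
  ltac:(move=> i hi; lia) Hz.
exists g'; split => //; split => //.
apply: le_trans h3; rewrite lerD2l lerN2.
have -> : K%:R * ((\sum_(t < K) Delta n g (a.+1 + t)%N) / K%:R + d%:R * (2 * T)) `^ alpha =
    \sum_(t < K) ((\sum_(t < K) Delta n g (a.+1 + t)%N) / K%:R + d%:R * (2 * T)) `^ alpha.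
  by rewrite sumr_const card_ord mulr_natl.
apply: ler_sum => t _.
have ht := ltn_ord t.
have sumD0 : 0 <= \sum_(t < K) Delta n g (a.+1 + t)%N by apply: sumr_ge0 => i _; exact: Delta_ge0.
apply: ge0_ler_powR => //; rewrite ?nnegrE.
- by rewrite addr_ge0 ?sumr_ge0 // mulr_ge0 // mulr_ge0.
- by rewrite addr_ge0 // ?mulr_ge0 // ?divr_ge0 // ltW.
rewrite lerD2r.
have Ez : forall j, z (a.+1 + t)%N j - z (a.+1 + t).-1 j = (Q j - P j) / K%:R.
  move=> j; rewrite /z addSn /= -addn1 !natrD; field; by rewrite gt_eqF.
rewrite (eq_bigr (fun j => `|Q j - P j| / K%:R)); last first.
  by move=> j _; rewrite Ez normrM (@gtr0_norm _ (K%:R^-1)) // invr_gt0.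
rewrite -mulr_suml ler_pM2r ?invr_gt0 //.
have ET : forall j, Q j - P j = \sum_(t < K) (gpt g (a + t).+1 j - gpt g (a + t)%N j).
  by move=> j; rewrite (tele (fun i => gpt g i j)).
rewrite (eq_bigr (fun j => `|\sum_(t < K) (gpt g (a + t).+1 j - gpt g (a + t)%N j)|)); last first.
  by move=> j _; rewrite ET.
apply: (@le_trans _ _ (\sum_(j < d) \sum_(t < K) `|gpt g (a + t).+1 j - gpt g (a + t)%N j|)).
  by apply: ler_sum => j _; exact: ler_norm_sum.
rewrite exchange_big /=.
apply: ler_sum => u _.
have hu := ltn_ord u.
have hnot : ((a.+1 + u == 0)%N || (n < a.+1 + u)%N) = false by apply/negbTE; rewrite negb_or; apply/andP; split; lia.
by rewrite /Delta hnot addSn.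

Qed.

Lemma tail (g : nat -> pt R d) (om : config R d) (Y : nat -> pt R d -> pt R d)
    (T : R) s :
  0 <= alpha -> 0 <= T -> (1 <= s <= n)%N ->
  (forall i w, (1 <= i)%N -> om i (Y i w) /\ forall j, `|Y i w j - w j| <= T) ->
  exists g' : nat -> pt R d,
    (forall i : nat, (1 <= i <= n)%N -> ~~ (s <= i <= s + (n.+1 - s) - 1)%N -> g i = g' i) /\
    (forall i : nat, (1 <= i <= n)%N -> (s <= i <= s + (n.+1 - s) - 1)%N -> om i (g' i)) /\
    \sum_(t < n.+1 - s) (Delta n g (s + t)%N) `^ alpha -
    (n.+1 - s)%:R * (d%:R * (2 * T)) `^ alpha
      <= Tn n alpha g - Tn n alpha g'.
Proof.
move=> a0 T0 /andP[s1 sn] HY.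
pose z := fun i : nat => gpt g s.-1.
have Hz : forall i, (s.-1 <= i)%N -> (i < s + (n.+1 - s))%N ->
    ~~ (s <= i <= s + (n.+1 - s) - 1)%N -> z i = gpt g i.
  move=> i hi1 hi2 hi3.
  have -> : i = s.-1 by move: hi3; rewrite negb_and -!ltnNge; lia.
  by [].
have [g' [h1 [h2 h3]]] := @reroute g om Y T z s (n.+1 - s) (n.+1 - s) a0 T0 s1 ltac:(lia)
  ltac:(lia) HY ltac:(move=> i hi; lia) Hz.
exists g'; split => //; split => //.
apply: le_trans h3; rewrite lerD2l lerN2.
rewrite (_ : (n.+1 - s)%:R * (d%:R * (2 * T)) `^ alpha =
   \sum_(t < n.+1 - s) (d%:R * (2 * T)) `^ alpha); last by rewrite sumr_const card_ord mulr_natl.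
apply: ler_sum => t _.
rewrite big1 ?add0r // => j _; by rewrite /z subrr normr0.
Qed.

End Geo.

Lemma pow2j (R : realType) (lam : R) (j : nat) : 0 < lam ->
  j%:R * (lam * ln 2) < ((2 ^ j)%N%:R : R) `^ lam.
Proof.
move=> l0.
rewrite natrX -powR_mulrn; last by [].
rewrite -powRrM /powR (negbTE (_ : (2:R) != 0)); last by rewrite pnatr_eq0.
apply: lt_le_trans (expR_ge1Dx _).
rewrite mulrA ltrDr //.
Qed.

Lemma L_c1 (R : realFieldType) (T D : R) : 0 <= T -> 0 <= D -> 16*(2*D+1) <= T -> 4*((2*D+1)*T) <= T^+2/4.
Proof. move=> *; nra. Qed.
Lemma L_c2 (R : realFieldType) (C D K1 T : R) : 0 <= T -> 4*C*(2*D+1) <= K1^+2 -> C*((2*D+1)*T) <= K1^+2*T/4.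
Proof. move=> *; nra. Qed.
Lemma L_c3 (R : realFieldType) (j L W K1 : R) : 0 <= j -> 0 < L -> 0 <= W -> j*L <= W -> 2*K1 <= L*W -> j*K1 <= 1/2 * W^+2.
Proof. move=> *; nra. Qed.
Lemma L_pb1 (R : realFieldType) (D T : R) : 0 <= D -> 0 <= T -> 16*(2*D+1) <= T -> D*(2*T) + D*(2*T) + 4*T <= T^+2/4.
Proof. move=> *; nra. Qed.

Theorem lemma1 (R : realType) (d : nat) (alpha : R) :
  (1 <= d)%N -> 1 < alpha ->
  forall zeta : R, 0 < zeta ->
  exists theta : R, 0 < theta /\
  exists N : nat, forall n : nat, (N < n)%N ->
  forall s : nat, (1 <= s <= n)%N ->
  forall (gamma : nat -> pt R d) (omega' : config R d),
    theta_property n theta omega' ->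
    Num.max (Delta n gamma s) (Delta n gamma s.+1) <= (n%:R) `^ zeta
    \/
    exists (gamma' : nat -> pt R d) (k : nat), (0 < k)%N /\
      (forall i : nat, (1 <= i <= n)%N -> ~~ (s <= i <= s + k - 1)%N ->
          gamma i = gamma' i) /\
      (forall i : nat, (1 <= i <= n)%N -> (s <= i <= s + k - 1)%N ->
          omega' i (gamma' i)) /\
      Tn n alpha gamma' + (k.+1)%:R * (n%:R) `^ theta <= Tn n alpha gamma.
Proof.
move=> hd ha zeta hz.
have a0 : 0 <= alpha by apply: ltW; apply: lt_trans ha; exact: ltr01.
set lam := zeta / 8.
have l0 : 0 < lam by rewrite /lam divr_gt0.
have ln2 : 0 < ln (2 : R) by apply: ln_gt0; rewrite ltr1n.
set D := (d%:R : R).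
have D0 : 0 <= D by rewrite /D ler0n.
set C := Cst R alpha.
have C0 : 0 < C by exact: Cst_gt0.
set K1 := 4 * C * (2 * D + 1) + 1.
have K0' : 0 <= 4 * C * (2 * D + 1).
  by apply: mulr_ge0; [apply: mulr_ge0; lra | lra].
have K10 : 1 <= K1 by rewrite /K1; lra.
set X := 16 * (2 * D + 1) + 2 * K1 / (lam * ln 2) + 1.
have X1 : 1 <= X.
  have : 0 <= 2 * K1 / (lam * ln 2).
    by apply: divr_ge0; [lra | apply: mulr_ge0; lra].
  rewrite /X; lra.
exists (zeta / 2); split; first by rewrite divr_gt0.
exists (Num.trunc (X `^ lam^-1)).
move=> n hn s hs gamma omega' hth.
have n0 : (0 < n)%N by lia.
have nX : X `^ lam^-1 <= n%:R.
  apply: ltW; apply: lt_le_trans (truncnS_gt _) _.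
  by rewrite ler_nat.
set W := n%:R `^ lam.
have WX : X <= W.
  have -> : X = (X `^ lam^-1) `^ lam.
    by rewrite -powRrM mulVf ?gt_eqF // powRr1 //; lra.
  apply: ge0_ler_powR => //; rewrite ?nnegrE ?powR_ge0 ?ler0n //; lra.
have W1 : 1 <= W by lra.
have W0 : 0 <= W by lra.
set T := n%:R `^ (zeta / 2).
have TW : T = W ^+ 4.
  rewrite /T /W -powR_mulrn // -powRrM; congr (_ `^ _); rewrite /lam; lra.
have BT : n%:R `^ zeta = T ^+ 2.
  rewrite TW -exprM -powR_mulrn // -powRrM; congr (_ `^ _); rewrite /lam; lra.
have WT : W <= T.
  have W3 : 1 <= W ^+ 3 by rewrite exprn_ege1.
  rewrite TW exprS; rewrite -{1}(mulr1 W); apply: ler_wpM2l => //.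
have T1 : 1 <= T by lra.
have T0 : 0 <= T by lra.
set eps := (2 * D + 1) * T.
have e0 : 0 < eps by rewrite /eps mulr_gt0 //; lra.
set rho := K1 / W ^+ 2.
have W2 : 0 < W ^+ 2 by rewrite exprn_gt0 //; lra.
have r0 : 0 <= rho by rewrite /rho divr_ge0 //; lra.
have [F hF] := @theta_choice R d n _ _ hth.
pose Y := fun i (w : pt R d) => F i (fun j => Num.floor (w j)).
have HY : forall i w, (1 <= i)%N -> omega' i (Y i w) /\ forall j, `|Y i w j - w j| <= T.
  move=> i w i1; have [h1 h2] := hF i (fun j => Num.floor (w j)) i1.
  by split => //; apply: close_floor.
case: (leP (Num.max (Delta n gamma s) (Delta n gamma s.+1)) (n%:R `^ zeta)) => hmax.
  by left.
right; apply: contrapT => NG.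
have s1 : (1 <= s)%N by case/andP: hs.
have sn : (s <= n)%N by case/andP: hs.
set m := (n.+1 - s)%N.
have m0 : (0 < m)%N by rewrite /m subn_gt0 ltnS.
pose c := fun t => Delta n gamma (s + t)%N.
have mn : (m <= n)%N by rewrite /m leq_subLR -addn1 addnC leq_add2r.
have c0 : forall t, 0 <= c t by move=> t; exact: Delta_ge0.
have psup : forall x, 0 <= x -> x `^ alpha + T <= (x + T) `^ alpha.
  move=> x x0.
  apply: le_trans (@superadd R alpha ha x T x0 T0); rewrite lerD2l.
  exact: (@pow_ge_self R alpha ha T T1).
have Wk : forall K, (1 < K <= m)%N ->
    PS R alpha c K < K%:R * (SS R c K / K%:R + eps) `^ alpha.
  move=> K /andP[K1' Km].
  rewrite ltNge; apply/negP => hge.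
  have sK : (s + K <= n.+1)%N by move: Km; rewrite /m leq_subRL 1?addnC // ltnW // ltnS.
  have [g' [h1 [h2 h3]]] := @window R d n alpha gamma omega' Y T s K a0 T0 s1 K1' sK HY.
  have Kp : (0 < K.-1)%N by rewrite -ltnS prednK // ltnW.
  apply: NG; exists g', K.-1; split; first exact: Kp.
  split; first exact: h1.
  split; first exact: h2.
  rewrite prednK; last exact: ltnW.
  set x := (\sum_(t < K) Delta n gamma (s + t)%N) / K%:R + d%:R * (2 * T).
  have x0 : 0 <= x.
    rewrite /x addr_ge0 //; last by rewrite mulr_ge0 // mulr_ge0.
    by rewrite divr_ge0 // ?sumr_ge0 // => t _; exact: Delta_ge0.
  have hx := psup x x0.
  have Ex : x + T = SS R c K / K%:R + eps.
    by rewrite /x /eps /SS /c -/D; ring.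
  rewrite Ex in hx.
  have Kr : 0 <= K%:R :> R by rewrite ler0n.
  have : K%:R * (x `^ alpha + T) <= K%:R * (SS R c K / K%:R + eps) `^ alpha.
    by apply: ler_wpM2l.
  rewrite /PS /c in hge.
  move: h3 hge; rewrite -/x.
  set P0 := \sum_(t < K) _.
  set Q0 := K%:R * (SS R c K / K%:R + eps) `^ alpha.
  rewrite mulrDr.
  set Z1 := K%:R * x `^ alpha.
  set Z2 := K%:R * T.
  set A1 := Tn n alpha gamma; set A2 := Tn n alpha g'.
  lra.
have Tl : PS R alpha c m < m%:R * (D * (2 * T)) `^ alpha + (m.+1)%:R * T.
  rewrite ltNge; apply/negP => hge.
  have [g' [h1 [h2 h3]]] := @tail R d n alpha gamma omega' Y T s a0 T0 hs HY.
  apply: NG; exists g', m; split; first exact: m0.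
  split; first exact: h1.
  split; first exact: h2.
  rewrite /PS /c in hge.
  move: h3 hge; rewrite -/m -/D.
  set P0 := \sum_(t < m) _.
  set Z1 := m%:R * _.
  set Z2 := m.+1%:R * _.
  set A1 := Tn n alpha gamma; set A2 := Tn n alpha g'.
  lra.
have B0 : 0 < T ^+ 2 by rewrite exprn_gt0 //; lra.
have hB : T ^+ 2 < c 0%N \/ ((1 < m)%N /\ T ^+ 2 < c 1%N).
  move: hmax; rewrite BT lt_max => /orP[h|h].
    by left; rewrite /c addn0.
  right; split; last by rewrite /c addn1.
  case: (ltnP s n) => hsn; first by rewrite /m subSn // ltnS subn_gt0.
  by move: h; rewrite Delta_out ?ltnS //; lra.
have X16 : 16 * (2 * D + 1) <= T.
  have : 0 <= 2 * K1 / (lam * ln 2).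
    by apply: divr_ge0; [lra | apply: mulr_ge0; lra].
  rewrite /X in WX; lra.
have XK : 2 * K1 / (lam * ln 2) <= W.
  have : 0 <= 16 * (2 * D + 1) by lra.
  rewrite /X in WX; lra.
have c1 : 4 * eps <= T ^+ 2 / 4 by rewrite /eps; exact: (@L_c1 _ _ _ T0 D0 X16).
have c2 : C * eps <= rho ^+ 2 * (T ^+ 2 / 4).
  have W0' : W != 0 by rewrite gt_eqF //; lra.
  have -> : rho ^+ 2 * (T ^+ 2 / 4) = K1 ^+ 2 * T / 4.
    by rewrite TW /rho; field.
  have KK : 4 * C * (2 * D + 1) <= K1 ^+ 2.
    rewrite expr2; have : K1 * 1 <= K1 * K1 by apply: ler_wpM2l; lra.
    have K1d : K1 = 4 * C * (2 * D + 1) + 1 by [].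
    rewrite mulr1; lra.
  by rewrite /eps; exact: (@L_c2 _ _ _ _ _ T0 KK).
have c3 : forall j, (2 ^ j <= m)%N -> j%:R * rho <= 1/2.
  move=> j hj.
  have hj' := @pow2j R lam j l0.
  have h2 : ((2 ^ j)%N%:R : R) `^ lam <= W.
    apply: ge0_ler_powR; rewrite ?nnegrE ?ler0n //; first lra.
    rewrite ler_nat; apply: leq_trans hj _; exact: mn.
  set L := lam * ln 2 in hj' XK.
  have L0 : 0 < L by rewrite /L mulr_gt0.
  have jL : j%:R * L <= W by lra.
  have KL : 2 * K1 <= L * W.
    by move: XK; rewrite ler_pdivrMr // [W * _]mulrC.
  have j0 : 0 <= j%:R :> R by rewrite ler0n.
  rewrite /rho mulrA ler_pdivrMr //.
  exact: (@L_c3 _ _ _ _ _ j0 L0 W0 jL KL).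
have IT := @iterate R alpha ha (T ^+ 2) eps rho c m c0 m0 hB e0 r0 (ltW B0) c1 c2 c3 Wk.
have pb : 2 * (D * (2 * T)) `^ alpha + 4 * T <= (T ^+ 2 / 4) `^ alpha.
  have DT0 : 0 <= D * (2 * T) by rewrite mulr_ge0 // mulr_ge0.
  have hT : D * (2 * T) + D * (2 * T) + 4 * T <= T ^+ 2 / 4.
    exact: (@L_pb1 _ _ _ D0 T0 X16).
  have p1 : (D * (2 * T) + D * (2 * T) + 4 * T) `^ alpha <= (T ^+ 2 / 4) `^ alpha.
    by apply: ge0_ler_powR; rewrite ?nnegrE //; lra.
  have p2 := @superadd R alpha ha (D * (2 * T) + D * (2 * T)) (4 * T) ltac:(lra) ltac:(lra).
  have p3 := @superadd R alpha ha (D * (2 * T)) (D * (2 * T)) DT0 DT0.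
  have p4 := @pow_ge_self R alpha ha (4 * T) ltac:(lra).
  lra.
have mr : 1 <= m%:R :> R by rewrite ler1n.
set PP := (D * (2 * T)) `^ alpha in Tl pb.
set QQ := (T ^+ 2 / 4) `^ alpha in IT pb.
have H1 : m%:R / 2 * (2 * PP + 4 * T) <= m%:R / 2 * QQ by apply: ler_wpM2l; lra.
have E1 : m%:R / 2 * (2 * PP + 4 * T) = m%:R * PP + 2 * (m%:R * T) by field.
have E2 : m.+1%:R * T = m%:R * T + T by rewrite -addn1 natrD; ring.
have H2 : T <= m%:R * T by rewrite ler_peMl.
rewrite E1 in H1; rewrite E2 in Tl.
set Y1 := m%:R * PP in H1 Tl; set Y2 := m%:R * T in H1 Tl H2.
set Y3 := m%:R / 2 * QQ in H1 IT.
lra.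
Qed.
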